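(* Let $\alpha_1,\dots,\alpha_K\in\mathbb R^d\setminus\{0\}$ and $\eta_1,\dots,\eta_J\in\mathbb R^d$, and let $\mathcal G=\{\sum_{j=1}^J\nu_j\eta_j:\nu_j\in[0,1],\sum_j\nu_j=1\}$. Writing $\pi(\eta)$ for the canonical projection of $\eta$ with respect to $\{\alpha_1,\dots,\alpha_K\}$, suppose $\|\pi(\eta_1)\|>\max_{j=2,\dots,J}\|\pi(\eta_j)\|$. Then $\eta_1$ is the unique maximizer of $\eta\mapsto\|\pi(\eta)\|$ over $\mathcal G$.
   Context: Canonical projection: for $\eta\ne0$, choose a (possibly empty) subset $\{\alpha_{k_1},\dots,\alpha_{k_m}\}$ of $\{\alpha_1,\dots,\alpha_K\}$, $\mathcal H_\eta$ its span, such that $P_{\mathcal H_\eta}\eta=\sum_p\gamma_{k_p}\alpha_{k_p}$ with all $\gamma_{k_p}\ge0$ and $\alpha_k^{T}P_{\mathcal H_\eta^\perp}\eta<0$ for all $k\notin\{k_1,\dots,k_m\}$; such a subset exists and $\pi(\eta):=P_{\mathcal H_\eta^\perp}\eta$ is uniquely determined and continuous in $\eta$ (set $\pi(0)=0$). $P$ denotes orthogonal projection. *)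

(* Defs.v *)
From HB Require Import structures.
From mathcomp Require Import all_boot all_order all_algebra.
From mathcomp Require Import boolp classical_sets reals.
Set Implicit Arguments. Unset Strict Implicit. Unset Printing Implicit Defensive.
Import Order.TTheory GRing.Theory Num.Theory.
Local Open Scope ring_scope.

Section Defs.
Variables (R : realType) (d : nat).
Notation vec := 'rV[R]_d.

Definition dotv (u v : vec) : R := (u *m v^T) 0 0.
Definition normv (u : vec) : R := Num.sqrt (dotv u u).

Definition is_orth_proj (K : nat) (a : 'I_K -> vec) (S : {set 'I_K})
    (eta h : vec) : Prop :=
  (exists c : 'I_K -> R, h = \sum_(k in S) c k *: a k) /\
  (forall k, k \in S -> dotv (a k) (eta - h) = 0).

(* p is P_{H_eta^perp} eta for an admissible subset S as in the definition of
   the canonical projection: P_{H} eta = sum_{k in S} gamma_k alpha_k with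
   gamma_k >= 0, and alpha_k^T P_{H^perp} eta < 0 for k not in S. *)
Definition is_canon_proj (K : nat) (alpha : 'I_K -> vec) (eta p : vec) : Prop :=
  exists (S : {set 'I_K}) (gamma : 'I_K -> R),
    (forall k, k \in S -> 0 <= gamma k) /\
    is_orth_proj alpha S eta (\sum_(k in S) gamma k *: alpha k) /\
    p = eta - \sum_(k in S) gamma k *: alpha k /\
    (forall k, k \notin S -> dotv (alpha k) p < 0).

(* The canonical projection pi(eta) (pi(0) = 0); for eta != 0 it is the
   (unique, by the paper) vector satisfying is_canon_proj, chosen classically. *)
Definition canon_proj (K : nat) (alpha : 'I_K -> vec) (eta : vec) : vec :=
  if eta == 0 then 0 else xget 0 [set p | is_canon_proj alpha eta p].

Definition in_hull (J : nat) (etas : 'I_J -> vec) (eta : vec) : Prop :=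
  exists nu : 'I_J -> R,
    (forall j, 0 <= nu j <= 1) /\ \sum_j nu j = 1 /\
    eta = \sum_j nu j *: etas j.
End Defs.

(* Main.v *)
Require Import Defs.
From HB Require Import structures.
From mathcomp Require Import all_boot all_order all_algebra.
From mathcomp Require Import boolp classical_sets reals.
From mathcomp Require Import ring lra.
Import Order.TTheory GRing.Theory Num.Theory.
Local Open Scope ring_scope.
Set Implicit Arguments. Unset Strict Implicit.

Lemma dotvE {R : realType} {d : nat} (u v : 'rV[R]_d) :
  dotv u v = \sum_i u 0 i * v 0 i.
Proof. by rewrite /dotv !mxE; apply: eq_bigr => i _; rewrite mxE. Qed.

Lemma dotvC {R : realType} {d : nat} (u v : 'rV[R]_d) : dotv u v = dotv v u.
Proof. by rewrite !dotvE; apply: eq_bigr => i _; rewrite mulrC. Qed.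

Lemma dotvDl {R : realType} {d : nat} (u w v : 'rV[R]_d) :
  dotv (u + w) v = dotv u v + dotv w v.
Proof. by rewrite !dotvE -big_split; apply: eq_bigr => i _; rewrite mxE mulrDl. Qed.

Lemma dotvZl {R : realType} {d : nat} (c : R) (u v : 'rV[R]_d) :
  dotv (c *: u) v = c * dotv u v.
Proof. by rewrite !dotvE mulr_sumr; apply: eq_bigr => i _; rewrite mxE mulrA. Qed.

Lemma dotv0l {R : realType} {d : nat} (v : 'rV[R]_d) : dotv 0 v = 0.
Proof. by rewrite dotvE big1 // => i _; rewrite mxE mul0r. Qed.

Lemma dotvNl {R : realType} {d : nat} (u v : 'rV[R]_d) : dotv (- u) v = - dotv u v.
Proof. by rewrite -scaleN1r dotvZl mulN1r. Qed.

Lemma dotvBl {R : realType} {d : nat} (u w v : 'rV[R]_d) :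
  dotv (u - w) v = dotv u v - dotv w v.
Proof. by rewrite dotvDl dotvNl. Qed.

Lemma dotvDr {R : realType} {d : nat} (v u w : 'rV[R]_d) :
  dotv v (u + w) = dotv v u + dotv v w.
Proof. by rewrite dotvC dotvDl !(dotvC v). Qed.
Lemma dotvBr {R : realType} {d : nat} (v u w : 'rV[R]_d) :
  dotv v (u - w) = dotv v u - dotv v w.
Proof. by rewrite dotvC dotvBl !(dotvC v). Qed.
Lemma dotvZr {R : realType} {d : nat} (c : R) (v u : 'rV[R]_d) :
  dotv v (c *: u) = c * dotv v u.
Proof. by rewrite dotvC dotvZl dotvC. Qed.
Lemma dotv0r {R : realType} {d : nat} (v : 'rV[R]_d) : dotv v 0 = 0.
Proof. by rewrite dotvC dotv0l. Qed.

Lemma dotv_suml {R : realType} {d : nat} (I : Type) (r : seq I) (P : pred I)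
   (F : I -> 'rV[R]_d) v :
  dotv (\sum_(i <- r | P i) F i) v = \sum_(i <- r | P i) dotv (F i) v.
Proof.
exact: (big_morph (fun u => dotv u v) (fun x y => dotvDl x y v) (dotv0l v)).
Qed.
Lemma dotv_sumr {R : realType} {d : nat} (I : Type) (r : seq I) (P : pred I)
   (F : I -> 'rV[R]_d) v :
  dotv v (\sum_(i <- r | P i) F i) = \sum_(i <- r | P i) dotv v (F i).
Proof.
rewrite dotvC dotv_suml; apply: eq_bigr => i _; exact: dotvC.
Qed.

Lemma dotv_ge0 {R : realType} {d : nat} (u : 'rV[R]_d) : 0 <= dotv u u.
Proof. by rewrite dotvE sumr_ge0 // => i _; rewrite -expr2 sqr_ge0. Qed.

Lemma dotv_eq0 {R : realType} {d : nat} (u : 'rV[R]_d) : dotv u u = 0 -> u = 0.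
Proof.
rewrite dotvE => /eqP; rewrite psumr_eq0; last by move=> i _; rewrite -expr2 sqr_ge0.
move=> /allP H; apply/matrixP => i j; rewrite mxE (ord1 i).
have := H j (mem_index_enum _); rewrite -expr2 sqrf_eq0 => /eqP ->; by [].
Qed.

Lemma dotv_sq {R : realType} {d : nat} (x y : 'rV[R]_d) :
  dotv (x + y) (x + y) = dotv x x + 2 * dotv x y + dotv y y.
Proof. rewrite !dotvDl !dotvDr (dotvC y x); ring. Qed.

Lemma dotv_sqB {R : realType} {d : nat} (x y : 'rV[R]_d) :
  dotv (x - y) (x - y) = dotv x x - 2 * dotv x y + dotv y y.
Proof. rewrite !dotvBl !dotvBr (dotvC y x); ring. Qed.

Definition kkt {R : realType} {d K : nat} (al : 'I_K -> 'rV[R]_d) (eta : 'rV[R]_d)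
  (g : 'I_K -> R) : Prop :=
  (forall k, 0 <= g k) /\
  (forall k, dotv (al k) (eta - \sum_i g i *: al i) <= 0) /\
  (forall k, g k * dotv (al k) (eta - \sum_i g i *: al i) = 0).

Definition ext {R : realType} {K : nat} (g : 'I_K -> R) (t : R) (k : 'I_K.+1) : R :=
  if unlift ord_max k is Some j then g j else t.

Lemma widen_lift (K : nat) (j : 'I_K) : widen_ord (leqnSn K) j = lift ord_max j.
Proof. by apply: val_inj; rewrite [RHS]lift_max. Qed.

Lemma ext_widen {R : realType} {K : nat} (g : 'I_K -> R) t j :
  ext g t (widen_ord (leqnSn K) j) = g j.
Proof. by rewrite /ext widen_lift liftK. Qed.

Lemma ext_max {R : realType} {K : nat} (g : 'I_K -> R) t : ext g t ord_max = t.
Proof. by rewrite /ext unlift_none. Qed.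

Lemma split_k (K : nat) (k : 'I_K.+1) :
  k = ord_max \/ exists j, k = widen_ord (leqnSn K) j.
Proof.
case: (unliftP ord_max k) => [j ->|->]; last by left.
by right; exists j; rewrite widen_lift.
Qed.

Lemma sum_ext {R : realType} {d K : nat} (al : 'I_K.+1 -> 'rV[R]_d) g t :
  \sum_i ext g t i *: al i =
  \sum_j g j *: al (widen_ord (leqnSn K) j) + t *: al ord_max.
Proof.
rewrite big_ord_recr /= ext_max; congr (_ + _).
by apply: eq_bigr => j _; rewrite ext_widen.
Qed.

Lemma dotv_sumZl {R : realType} {d K : nat} (g : 'I_K -> R) (F : 'I_K -> 'rV[R]_d) x :
  dotv (\sum_j g j *: F j) x = \sum_j g j * dotv (F j) x.
Proof. by rewrite dotv_suml; apply: eq_bigr => j _; rewrite dotvZl. Qed.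

Lemma aux_zmod (V : zmodType) (e A S B : V) : e - A - (S - B) = e - S - (A - B).
Proof. rewrite !opprB -!addrA; congr (_ + _); rewrite addrCA [RHS]addrCA; congr (_ + _); exact: addrC. Qed.

Lemma aux2 (V : zmodType) (e S T : V) : e = S + T + (e - S - T).
Proof. by rewrite -[e - S - T]addrA -opprD [RHS]addrC subrK. Qed.
Lemma aux3 (V : zmodType) (e S : V) : e = S + (e - S).
Proof. by rewrite addrC subrK. Qed.

Lemma kkt_exists {R : realType} {d : nat} (K : nat) :
  forall (al : 'I_K -> 'rV[R]_d) eta, exists g, kkt al eta g.
Proof.
elim: K => [|K IH] al eta.
  by exists (fun _ => 0); split; [|split] => -[].
set a := al ord_max.
set al' := fun j : 'I_K => al (widen_ord (leqnSn K) j).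
have [g' [g'0 [g'le g'sl]]] := IH al' eta.
set p' := eta - \sum_j g' j *: al' j.
case: (lerP (dotv a p') 0) => Ha.
  exists (ext g' 0); rewrite /kkt.
  have -> : eta - \sum_i ext g' 0 i *: al i = p'.
    by rewrite sum_ext scale0r addr0.
  split; [|split] => k; case: (split_k k) => [->|[j ->]];
    rewrite ?ext_max ?ext_widen ?mul0r //.
  all: try first [exact: g'0 | exact: g'le | exact: g'sl | exact: Ha].
set w := dotv a a.
have w0 : 0 < w.
  rewrite lt_neqAle dotv_ge0 andbT eq_sym; apply/eqP => /dotv_eq0 a0.
  by move: Ha; rewrite a0 dotv0l ltxx.
have wn0 : w != 0 by rewrite gt_eqF.
set P := fun x => x - (dotv x a / w) *: a.
have [gt [gt0 [gtle gtsl]]] := IH (fun j => P (al' j)) (P eta).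
set r := eta - \sum_j gt j *: al' j.
set t := dotv r a / w.
set pt := r - t *: a.
have Ept : P eta - \sum_j gt j *: P (al' j) = pt.
  rewrite /pt /r /t /P dotvBl dotv_sumZl.
  under eq_bigr => j _ do rewrite scalerBr scalerA.
  rewrite sumrB -scaler_suml.
  have -> : \sum_i gt i * (dotv (al' i) a / w) = (\sum_i gt i * dotv (al' i) a) / w.
    by rewrite mulr_suml; apply: eq_bigr => j _; rewrite mulrA.
  by rewrite mulrBl scalerBl aux_zmod.
have pta : dotv a pt = 0.
  by rewrite /pt dotvBr dotvZr (dotvC a r) /t -/w divfK // subrr.
have Pal : forall j, dotv (P (al' j)) pt = dotv (al' j) pt.
  by move=> j; rewrite /P dotvBl dotvZl pta mulr0 subr0.
have {}gtle : forall j, dotv (al' j) pt <= 0.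
  by move=> j; rewrite -Pal -Ept; apply: gtle.
have {}gtsl : forall j, gt j * dotv (al' j) pt = 0.
  by move=> j; rewrite -Pal -Ept; apply: gtsl.
case: (lerP 0 t) => Ht.
  exists (ext gt t); rewrite /kkt.
  have -> : eta - \sum_i ext gt t i *: al i = pt.
    by rewrite sum_ext opprD addrA.
  split; [|split] => k; case: (split_k k) => [->|[j ->]];
    rewrite ?ext_max ?ext_widen ?pta ?mulr0 //.
  all: try first [exact: gt0 | exact: gtle | exact: gtsl | exact: Ht].
exfalso.
have E1 : dotv p' p' = dotv eta p'.
  rewrite {1}/p' dotvBl dotv_sumZl big1 ?subr0 // => j _; exact: g'sl.
have Eeta : eta = \sum_j gt j *: al' j + t *: a + pt.
  exact: aux2.
have E2 : dotv eta p' = \sum_j gt j * dotv (al' j) p' + t * dotv a p' + dotv pt p'.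
  by rewrite {1}Eeta !dotvDl dotv_sumZl dotvZl.
have S2 : \sum_j gt j * dotv (al' j) p' <= 0.
  by apply: sumr_le0 => j _; apply: mulr_ge0_le0; [exact: gt0 | exact: g'le].
have T2 : t * dotv a p' < 0 by rewrite pmulr_llt0.
have E3 : dotv pt pt = dotv eta pt.
  rewrite {1}/pt /r !dotvBl dotvZl dotvC pta mulr0 subr0 dotv_sumZl.
  by rewrite big1 ?subr0 // => j _; exact: gtsl.
have E4 : dotv eta pt = \sum_j g' j * dotv (al' j) pt + dotv p' pt.
  have Ee : eta = \sum_j g' j *: al' j + p' by exact: aux3.
  by rewrite {1}Ee dotvDl dotv_sumZl.
have S4 : \sum_j g' j * dotv (al' j) pt <= 0.
  by apply: sumr_le0 => j _; apply: mulr_ge0_le0; [exact: g'0 | exact: gtle].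
have := dotv_ge0 (p' - pt).
rewrite dotv_sqB.
have := dotvC p' pt; lra.
Qed.

Lemma canon_spec {R : realType} {d K : nat} (al : 'I_K -> 'rV[R]_d) eta :
  exists b : 'I_K -> R, (forall k, 0 <= b k) /\
    canon_proj al eta = eta - \sum_k b k *: al k /\
    forall b' : 'I_K -> R, (forall k, 0 <= b' k) ->
      dotv (canon_proj al eta) (canon_proj al eta) <=
      dotv (eta - \sum_k b' k *: al k) (eta - \sum_k b' k *: al k).
Proof.
rewrite /canon_proj; case: eqP => [->|/eqP en0].
  exists (fun=> 0); split=> //; split.
    by rewrite big1 ?subr0 // => k _; rewrite scale0r.
  by move=> b' _; rewrite dotv0l dotv_ge0.
have [g [g0 [gle gsl]]] := kkt_exists al eta.
have ex : exists p, is_canon_proj al eta p.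
  set p := eta - \sum_i g i *: al i.
  exists p.
  set S := [set k | dotv (al k) p == 0].
  have hS : \sum_(k in S) g k *: al k = \sum_k g k *: al k.
    rewrite big_mkcond; apply: eq_bigr => k _; case: ifP => // kS.
    have := gsl k; rewrite -/p => /eqP; rewrite mulf_eq0 => /orP[/eqP -> |].
      by rewrite scale0r.
    by rewrite inE in kS; rewrite kS.
  exists S, g; split; [by move=> k _; exact: g0|].
  rewrite hS; split; [split; [by exists g; rewrite hS|] |split=> //].
    by move=> k; rewrite inE => /eqP.
  move=> k; rewrite inE => kS; rewrite lt_neqAle kS; exact: gle.
set p0 := xget _ _.
have : is_canon_proj al eta p0 by exact: (xgetPex 0 ex).
move=> [S [gam [gam0 [[_ horth] [hp hneg]]]]].
exists (fun k => if k \in S then gam k else 0); split.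
  by move=> k; case: ifP => // kS; exact: gam0.
set h := \sum_(k in S) gam k *: al k.
have hb : \sum_k (if k \in S then gam k else 0) *: al k = h.
  rewrite /h [RHS]big_mkcond; apply: eq_bigr => k _; case: ifP => //; by rewrite scale0r.
rewrite hb; split=> // b' b'0.
have dle : forall k, dotv (al k) p0 <= 0.
  move=> k; case: (boolP (k \in S)) => kS.
    by rewrite hp horth.
  exact: ltW (hneg k kS).
have p0h : dotv p0 h = 0.
  rewrite /h dotv_sumr big1 // => k kS; rewrite dotvZr dotvC hp horth // mulr0 //.
have p0c : dotv p0 (\sum_k b' k *: al k) <= 0.
  rewrite dotv_sumr; apply: sumr_le0 => k _; rewrite dotvZr dotvC.
  apply: mulr_ge0_le0; [exact: b'0 | exact: dle].
have -> : eta - \sum_k b' k *: al k = p0 + (h - \sum_k b' k *: al k).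
  by rewrite hp addrA subrK.
rewrite dotv_sq dotvBr.
have := dotv_ge0 (h - \sum_k b' k *: al k).
lra.
Qed.

Lemma jensen {R : realType} {d n : nat} (nu : 'I_n -> R) (x : 'I_n -> 'rV[R]_d) :
  (forall j, 0 <= nu j) -> \sum_j nu j = 1 ->
  dotv (\sum_j nu j *: x j) (\sum_j nu j *: x j) <= \sum_j nu j * dotv (x j) (x j).
Proof.
move=> nu0 nu1; set m := \sum_j nu j *: x j.
have H : 0 <= \sum_j nu j * dotv (x j - m) (x j - m).
  by apply: sumr_ge0 => j _; apply: mulr_ge0 => //; exact: dotv_ge0.
have e1 : \sum_j nu j * dotv (x j - m) (x j - m) =
          \sum_j nu j * dotv (x j) (x j) - 2 * dotv m m + dotv m m.
  under eq_bigr => j _ do rewrite dotv_sqB !mulrDr mulrN.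
  rewrite !big_split /= sumrN; congr (_ - _ + _).
    rewrite {2}/m dotv_sumZl mulr_sumr; apply: eq_bigr => j _.
    by rewrite mulrCA.
  by rewrite -mulr_suml nu1 mul1r.
lra.
Qed.

Theorem proposition5 (R : realType) (d K J : nat)
    (alpha : 'I_K -> 'rV[R]_d) (etas : 'I_J.+1 -> 'rV[R]_d) :
  (forall k, alpha k != 0) ->
  (forall j, j != ord0 ->
     normv (canon_proj alpha (etas j)) < normv (canon_proj alpha (etas ord0))) ->
  in_hull etas (etas ord0) /\
  (forall eta, in_hull etas eta -> eta != etas ord0 ->
     normv (canon_proj alpha eta) < normv (canon_proj alpha (etas ord0))).
Proof.
move=> _ Hlt; split.
  exists (fun j => if j == ord0 then 1 else 0); split; [|split].
  - by move=> j; case: eqP => _; rewrite ?lexx ?ler01.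
  - by rewrite (bigD1 ord0) //= ?eqxx big1 ?addr0 // => j /negbTE ->.
  - rewrite (bigD1 ord0) //= ?eqxx scale1r big1 ?addr0 // => j /negbTE ->.
    by rewrite scale0r.
move=> eta [nu [nu01 [nu1 ->]]] Hne.
have nu0 : forall j, 0 <= nu j by move=> j; case/andP: (nu01 j).
have [B HB] := choice (fun j => canon_spec alpha (etas j)).
set r := fun j => dotv (canon_proj alpha (etas j)) (canon_proj alpha (etas j)).
have Hd : forall j, j != ord0 -> r j < r ord0.
  move=> j jn; rewrite ltNge; apply/negP => H; move: (Hlt j jn).
  by rewrite /normv ltNge (ler_sqrt _ (dotv_ge0 _)) H.
have [b0 [_ [_ Hmin]]] := canon_spec alpha (\sum_j nu j *: etas j).
have Hb : forall k, 0 <= \sum_j nu j * B j k.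
  move=> k; apply: sumr_ge0 => j _; apply: mulr_ge0 => //.
  by case: (HB j) => H _; exact: H.
have H1 := Hmin _ Hb.
have E : \sum_j nu j *: etas j - \sum_k (\sum_j nu j * B j k) *: alpha k =
          \sum_j nu j *: canon_proj alpha (etas j).
  under [RHS]eq_bigr => j _ do rewrite (proj1 (proj2 (HB j))) scalerBr scaler_sumr.
  rewrite sumrB; congr (_ - _); rewrite exchange_big; apply: eq_bigr => k _.
  by rewrite scaler_suml; apply: eq_bigr => j _; rewrite scalerA.
rewrite E in H1; clear Hmin.
have H2 := jensen (fun j => canon_proj alpha (etas j)) nu0 nu1.
have H3 : \sum_j nu j * r j < r ord0.
  case: (pselect (exists j, j != ord0 /\ nu j != 0)) => [[j [jn nj]]|Hall].
    rewrite -subr_gt0 -[r ord0]mul1r -nu1 mulr_suml -sumrB (bigD1 j) //=.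
    have A : 0 < nu j * r ord0 - nu j * r j.
      rewrite -mulrBr mulr_gt0 //; last by rewrite subr_gt0 Hd.
      by rewrite lt_neqAle eq_sym nj nu0.
    have B' : 0 <= \sum_(i < J.+1 | i != j) (nu i * r ord0 - nu i * r i).
      apply: sumr_ge0 => i _; rewrite -mulrBr mulr_ge0 // subr_ge0.
      by case: (eqVneq i ord0) => [->|/Hd /ltW].
    lra.
  move/eqP: Hne => Hne; exfalso; apply: Hne.
  have Hz : forall j, j != ord0 -> nu j = 0.
    move=> j jn; case: (eqVneq (nu j) 0) => // nj; exfalso; apply: Hall; by exists j.
  have n0 : nu ord0 = 1.
    rewrite -nu1 (bigD1 ord0) // big1 => [|j /Hz //].
    exact: (esym (addr0 (nu ord0))).
  rewrite (bigD1 ord0) // n0 scale1r big1 => [|j /Hz ->]; last exact: scale0r.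
  exact: addr0.
have H4 : dotv (canon_proj alpha (\sum_j nu j *: etas j))
               (canon_proj alpha (\sum_j nu j *: etas j)) < r ord0.
  apply: (le_lt_trans H1); apply: (le_lt_trans H2); exact: H3.
rewrite /normv ltr_sqrt //; apply: le_lt_trans H4; exact: dotv_ge0.
Qed.
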